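(* Let $D$ be a distribution over $\mathcal{X}\times\mathcal{Y}$ ($\mathcal{X}\subset\mathbb{R}^d$, $\mathcal{Y}=\{1,\dots,c\}$) that is $(k_1,\dots,k_n)$-separable with $\delta$-margin, and let $K=\prod_{s=1}^n k_s$. Then there exists a 4-layer network $g:\mathcal{X}\to\mathbb{R}^c$ of the form $$p^s(x)=\sum_{l=1}^{k_s} v_{s,l}\,\rho(u_s^Tx-\beta_{s,l})\ (s=1,\dots,n),\qquad g(x)=W^T\big(\rho(u^Tp(x)-\gamma_1),\dots,\rho(u^Tp(x)-\gamma_K)\big)^T,$$ where $p(x)=(p^1(x),\dots,p^n(x))^T$, $u_s\in\mathbb{R}^d$, $\beta_{s,l},v_{s,l}\in\mathbb{R}$, $u\in\mathbb{R}^n$, $\gamma_i\in\mathbb{R}$, $W\in\mathbb{R}^{K\times c}$ (so $n(d+1)+2\sum_{s=1}^n k_s+(c+1)\prod_{s=1}^n k_s$ parameters), which classifies perfectly: with probability $1$ over $(x,y)\sim D$, $y$ is the unique maximizer of $j\mapsto g_j(x)$ over $j\in\{1,\dots,c\}$.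
   Context: $\rho(t)=1/(1+e^{-t})$ is the sigmoid function. Definition ($(k_1,\dots,k_n)$-separable with $\delta$-margin): Let $\mathcal{X}\subset\mathbb{R}^d$, $\mathcal{Y}=\{1,\dots,c\}$. A distribution $D$ over $\mathcal{X}\times\mathcal{Y}$ is $(k_1,\dots,k_n)$-separable with $\delta$-margin ($\delta>0$) if there exist $a_1,\dots,a_n\in\mathbb{R}^d$ with $\|a_s\|_2=1$ and constants $b_{s,1}<b_{s,2}<\cdots<b_{s,k_s+1}$ for each $s\in\{1,\dots,n\}$ such that, for each multi-index $\mathbf{i}=(i_1,\dots,i_n)$ with $i_s\in\{1,\dots,k_s\}$ and $\mathcal{X}_{\mathbf{i}}=\{x\in\mathcal{X}: b_{s,i_s}+\delta<a_s^Tx<b_{s,i_s+1}-\delta \text{ for all } 1\le s\le n\}$: (i) there is $y_{\mathbf{i}}\in\mathcal{Y}$ with $\mathbb{P}_{(x,y)\sim D}(y=y_{\mathbf{i}}\mid x\in\mathcal{X}_{\mathbf{i}})=1$; (ii) $\mathbb{P}_{(x,y)\sim D}\big(x\in\bigcup_{\mathbf{i}}\mathcal{X}_{\mathbf{i}}\big)=1$. *)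

(* Defs.v *)
From Stdlib Require Import Reals Lra Lia.
Open Scope R_scope.

Definition rho (t : R) : R := 1 / (1 + exp (- t)).

(* 1-based finite sums / products: sumR m f = f 1 + ... + f m *)
Fixpoint sumR (m : nat) (f : nat -> R) : R :=
  match m with O => 0 | S m' => sumR m' f + f m end.
Fixpoint prodN (m : nat) (f : nat -> nat) : nat :=
  match m with O => 1%nat | S m' => (prodN m' f * f m)%nat end.

(* Points of R^d are functions nat -> R of which coordinates 1..d are used. *)
Definition dot (d : nat) (a x : nat -> R) : R := sumR d (fun i => a i * x i).
Definition norm2 (d : nat) (a : nat -> R) : R := sqrt (dot d a a).

Definition set (T : Type) := T -> Prop.

Record ProbSpace (T : Type) := {
  measurable : set T -> Prop;
  prob : set T -> R;
  meas_full : measurable (fun _ => True);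
  meas_compl : forall A, measurable A -> measurable (fun z => ~ A z);
  meas_cunion : forall F : nat -> set T, (forall n, measurable (F n)) ->
      measurable (fun z => exists n, F n z);
  prob_nonneg : forall A, measurable A -> 0 <= prob A;
  prob_full : prob (fun _ => True) = 1;
  prob_sigma_add : forall F : nat -> set T, (forall n, measurable (F n)) ->
      (forall m n z, m <> n -> F m z -> F n z -> False) ->
      infinite_sum (fun n => prob (F n)) (prob (fun z => exists n, F n z))
}.
Arguments measurable {T} _ _.
Arguments prob {T} _ _.

Definition almost_surely {T} (D : ProbSpace T) (P : T -> Prop) : Prop :=
  exists N, measurable D N /\ prob D N = 0 /\ forall z, ~ P z -> N z.

(* Samples (x, y): x in R^d (coordinates 1..d), label y in {1,...,c}. *)
Definition sample := ((nat -> R) * nat)%type.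

Definition valid_index (n : nat) (k : nat -> nat) (idx : nat -> nat) : Prop :=
  forall s, (1 <= s <= n)%nat -> (1 <= idx s <= k s)%nat.

Definition cell (d n : nat) (X : (nat -> R) -> Prop) (a : nat -> nat -> R)
  (b : nat -> nat -> R) (delta : R) (idx : nat -> nat) (x : nat -> R) : Prop :=
  X x /\ forall s, (1 <= s <= n)%nat ->
    b s (idx s) + delta < dot d (a s) x < b s (S (idx s)) - delta.

Definition separable (d c n : nat) (X : (nat -> R) -> Prop) (D : ProbSpace sample)
  (k : nat -> nat) (delta : R) : Prop :=
  0 < delta /\
  exists (a : nat -> nat -> R) (b : nat -> nat -> R),
    (forall s, (1 <= s <= n)%nat -> norm2 d (a s) = 1) /\
    (forall s l, (1 <= s <= n)%nat -> (1 <= l <= k s)%nat -> b s l < b s (S l)) /\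
    (forall idx, valid_index n k idx ->
       exists yi, (1 <= yi <= c)%nat /\
         almost_surely D (fun z => cell d n X a b delta idx (fst z) -> snd z = yi)) /\
    almost_surely D (fun z => exists idx, valid_index n k idx /\ cell d n X a b delta idx (fst z)).

Definition net_p (d : nat) (k : nat -> nat) (us : nat -> nat -> R)
  (beta v : nat -> nat -> R) (s : nat) (x : nat -> R) : R :=
  sumR (k s) (fun l => v s l * rho (dot d (us s) x - beta s l)).

Definition net_g (d n K : nat) (k : nat -> nat) (us : nat -> nat -> R)
  (beta v : nat -> nat -> R) (u : nat -> R) (gamma : nat -> R)
  (W : nat -> nat -> R) (j : nat) (x : nat -> R) : R :=
  sumR K (fun i => W i j *
     rho (sumR n (fun s => u s * net_p d k us beta v s x) - gamma i)).

(* Main.v *)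
Require Import Defs.
From Stdlib Require Import Reals Lra Lia ClassicalEpsilon FunctionalExtensionality PropExtensionality.
Open Scope R_scope.
From Stdlib Require Import Classical.

Lemma sumR_ext n f g : (forall i, (1 <= i <= n)%nat -> f i = g i) -> sumR n f = sumR n g.
Proof. induction n; simpl; intros H; auto. rewrite IHn by (intros; apply H; lia). rewrite H by lia. auto. Qed.

Lemma sumR_scal n c f : sumR n (fun i => c * f i) = c * sumR n f.
Proof. induction n; simpl; [ring|]. rewrite IHn; ring. Qed.

Lemma sumR_le n f g : (forall i, (1 <= i <= n)%nat -> f i <= g i) -> sumR n f <= sumR n g.
Proof. induction n; simpl; intros H; [lra|]. assert (f (S n) <= g (S n)) by (apply H; lia).
 assert (sumR n f <= sumR n g) by (apply IHn; intros; apply H; lia). lra. Qed.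

Lemma sumR_const n c : sumR n (fun _ => c) = INR n * c.
Proof. induction n; simpl sumR; [simpl; ring|]. rewrite IHn, S_INR; ring. Qed.

Lemma sumR_err n (c f g e : nat -> R) :
  (forall i, (1 <= i <= n)%nat -> Rabs (f i - g i) <= e i) ->
  Rabs (sumR n (fun i => c i * f i) - sumR n (fun i => c i * g i)) <= sumR n (fun i => Rabs (c i) * e i).
Proof.
  induction n; simpl; intros H.
  - rewrite Rminus_0_r, Rabs_R0; lra.
  - replace (sumR n (fun i => c i * f i) + c (S n) * f (S n) - (sumR n (fun i => c i * g i) + c (S n) * g (S n)))
      with ((sumR n (fun i => c i * f i) - sumR n (fun i => c i * g i)) + c (S n) * (f (S n) - g (S n))) by ring.
    eapply Rle_trans; [apply Rabs_triang|]. rewrite Rabs_mult.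
    apply Rplus_le_compat. apply IHn; intros; apply H; lia.
    apply Rmult_le_compat_l; [apply Rabs_pos| apply H; lia].
Qed.

Definition ind (r i : nat) : R := if (i <=? r)%nat then 1 else 0.

Lemma sum_ind K r : sumR K (fun i => 1 * ind r i) = INR (Nat.min K r).
Proof.
  induction K; simpl sumR; [simpl; ring|]. rewrite IHK. unfold ind.
  destruct (Nat.leb_spec (S K) r).
  - rewrite Nat.min_l by lia. rewrite Nat.min_l by lia. rewrite S_INR; ring.
  - rewrite Nat.min_r by lia. rewrite Nat.min_r by lia. ring.
Qed.

Lemma sum_tele K r (f : nat -> R) : sumR K (fun i => (f i - f (i-1)%nat) * ind r i) = f (Nat.min K r) - f O.
Proof.
  induction K; simpl sumR; [simpl; ring|]. rewrite IHK. unfold ind.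
  destruct (Nat.leb_spec (S K) r).
  - rewrite Nat.min_l by lia. rewrite Nat.min_l by lia. replace (S K - 1)%nat with K by lia. try rewrite Nat.sub_0_r. ring.
  - rewrite Nat.min_r by lia. rewrite Nat.min_r by lia. ring.
Qed.

Lemma exp_le a b : a <= b -> exp a <= exp b.
Proof. intros [H|H]; [left; apply exp_increasing; auto| subst; lra]. Qed.

Lemma rho_bounds t : 0 <= rho t <= 1 /\ rho t <= exp t /\ 1 - rho t <= exp (- t).
Proof.
  unfold rho. rewrite exp_Ropp. pose proof (exp_pos t). set (E := exp t) in *.
  assert (1 / (1 + / E) = E / (E + 1)) as -> by (field; lra).
  assert (1 - E / (E+1) = 1 / (E+1)) as -> by (field; lra).
  repeat split.
  - apply Rmult_le_pos; [lra| left; apply Rinv_0_lt_compat; lra].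
  - apply (Rmult_le_reg_r (E+1)); [lra|]. field_simplify; lra.
  - apply (Rmult_le_reg_r (E+1)); [lra|]. field_simplify; nra.
  - apply (Rmult_le_reg_r (E+1)); [lra|]. apply (Rmult_le_reg_r E); [lra|]. field_simplify; nra.
Qed.

Lemma rho_hi t A : A <= t -> Rabs (rho t - 1) <= exp (- A).
Proof. intros H. destruct (rho_bounds t) as [[? ?] [? ?]]. rewrite Rabs_left1 by lra.
  eapply Rle_trans; [|apply exp_le with (a := -t); lra]. lra. Qed.

Lemma rho_lo t A : t <= - A -> Rabs (rho t - 0) <= exp (- A).
Proof. intros H. destruct (rho_bounds t) as [[? ?] [? ?]]. rewrite Rabs_right by lra.
  eapply Rle_trans; [|apply exp_le with (a := t); lra]. lra. Qed.

Section P.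
Context {T : Type} (D : ProbSpace T).

Lemma set_ext (A B : set T) : (forall z, A z <-> B z) -> A = B.
Proof. intros H; apply functional_extensionality; intros z; apply propositional_extensionality; auto. Qed.

Lemma meas_empty : measurable D (fun _ => False).
Proof. replace (fun _ : T => False) with (fun z : T => ~ (fun _ : T => True) z).
  apply meas_compl, meas_full. apply set_ext; intros; simpl; tauto. Qed.

Lemma meas_union2 A B : measurable D A -> measurable D B -> measurable D (fun z => A z \/ B z).
Proof. intros HA HB.
  replace (fun z => A z \/ B z) with (fun z => exists n, (fun n => match n with O => A | _ => B end) n z).
  apply meas_cunion. intros [|n]; auto.
  apply set_ext; intros z; split. intros [[|n] H]; auto. intros [H|H]; [exists O|exists 1%nat]; auto. Qed.

Lemma meas_inter2 A B : measurable D A -> measurable D B -> measurable D (fun z => A z /\ B z).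
Proof. intros HA HB.
  replace (fun z => A z /\ B z) with (fun z => ~ (fun z => (fun z => ~ A z) z \/ (fun z => ~ B z) z) z).
  apply meas_compl, meas_union2; apply meas_compl; auto.
  apply set_ext; intros z; simpl. tauto. Qed.

Lemma prob_empty : prob D (fun _ => False) = 0.
Proof.
  pose proof (prob_sigma_add _ D (fun _ => fun _ => False) (fun _ => meas_empty) ltac:(intros; auto)) as H.
  cbv beta in H. replace (fun z : T => exists _ : nat, False) with (fun _ : T => False) in H by (apply set_ext; intros; split; [tauto| intros [_ []]]).
  set (p := prob D (fun _ => False)) in *.
  destruct (Req_dec p 0) as [|Hp]; auto.
  destruct (H (Rabs p / 2)) as [N HN]. apply Rabs_pos_lt in Hp. lra.
  specialize (HN (S N) ltac:(lia)).
  assert (forall m, sum_f_R0 (fun _ => p) m = INR (S m) * p) as E.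
  { induction m; simpl sum_f_R0. simpl; ring. rewrite IHm. rewrite (S_INR (S m)). ring. }
  rewrite E in HN. rewrite !S_INR in HN.
  replace ((INR N + 1 + 1) * p - p) with ((INR N + 1) * p) in HN by ring.
  unfold R_dist in HN.
  unfold Rdist in HN.
  replace ((INR N + 1 + 1) * p - p) with ((INR N + 1) * p) in HN by ring.
  rewrite Rabs_mult, (Rabs_right (INR N + 1)) in HN by (pose proof (pos_INR N); lra).
  apply Rabs_pos_lt in Hp. pose proof (pos_INR N). nra.
Qed.

Lemma prob_add2 A B : measurable D A -> measurable D B -> (forall z, A z -> B z -> False) ->
  prob D (fun z => A z \/ B z) = prob D A + prob D B.
Proof. intros HA HB Hd.
  set (F := fun n => match n with O => A | 1%nat => B | _ => fun _ => False end).
  assert (HF : forall n, measurable D (F n)) by (intros [|[|n]]; simpl; auto using meas_empty).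
  pose proof (prob_sigma_add _ D F HF) as H.
  replace (fun z => exists n, F n z) with (fun z => A z \/ B z) in H.
  2:{ apply set_ext; intros z; split. intros [H1|H1]; [exists O|exists 1%nat]; auto.
      intros [[|[|n]] H1]; simpl in H1; auto. destruct H1. }
  apply (uniqueness_sum (fun n => prob D (F n))). apply H.
  intros [|[|m]] [|[|n']] z Hmn H1 H2; simpl in *; try tauto; eauto.
  intros eps Heps. exists 1%nat. intros n Hn.
  assert (forall m, sum_f_R0 (fun n => prob D (F n)) (S m) = prob D A + prob D B) as E.
  { induction m. simpl. auto. simpl sum_f_R0 in *. rewrite IHm. simpl. rewrite prob_empty. ring. }
  destruct n; [lia|]. rewrite E. unfold R_dist. rewrite Rminus_diag, Rabs_R0; auto.
Qed.

Definition null (N : set T) := measurable D N /\ prob D N = 0.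

Lemma null_sub B C : null B -> measurable D C -> (forall z, C z -> B z) -> prob D C = 0.
Proof. intros [HB HB0] HC Hs.
  assert (HBC : measurable D (fun z => B z /\ ~ C z)) by (apply meas_inter2; auto; apply meas_compl; auto).
  pose proof (prob_add2 C (fun z => B z /\ ~ C z) HC HBC ltac:(intros z h1 [h2 h3]; auto)) as E.
  cbv beta in E. replace (fun z => C z \/ (B z /\ ~ C z)) with B in E.
  2:{ apply set_ext; intros z; split. intros h; destruct (classic (C z)); auto. intros [h|[h _]]; auto. }
  pose proof (prob_nonneg _ D C HC). pose proof (prob_nonneg _ D _ HBC). lra.
Qed.

Lemma null_union A B : null A -> null B -> null (fun z => A z \/ B z).
Proof. intros [HA HA0] [HB HB0]. split. apply meas_union2; auto.
  assert (HBA : measurable D (fun z => B z /\ ~ A z)) by (apply meas_inter2; auto; apply meas_compl; auto).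
  pose proof (prob_add2 A (fun z => B z /\ ~ A z) HA HBA ltac:(intros z h1 [h2 h3]; auto)) as E.
  cbv beta in E. replace (fun z => A z \/ (B z /\ ~ A z)) with (fun z => A z \/ B z) in E.
  2:{ apply set_ext; intros z; split. intros [h|h]; auto. destruct (classic (A z)); auto. intros [h|[h _]]; auto. }
  rewrite E, HA0, (null_sub B); [ring| split; auto | auto | tauto]. Qed.

Lemma null_bigunion (N0 : set T) (G : nat -> set T) K : null N0 -> (forall m, null (G m)) ->
  null (fun z => N0 z \/ exists m, (m < K)%nat /\ G m z).
Proof. intros H0 HG. induction K.
  - replace (fun z => N0 z \/ exists m, (m < 0)%nat /\ G m z) with N0; auto.
    apply set_ext; intros z; split; auto. intros [h|[m [h _]]]; auto; lia.
  - replace (fun z => N0 z \/ exists m, (m < S K)%nat /\ G m z) with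
      (fun z => (fun z => N0 z \/ exists m, (m < K)%nat /\ G m z) z \/ G K z).
    apply null_union; auto.
    apply set_ext; intros z; split.
    + intros [[h|[m [h1 h2]]]|h]; auto; right; eauto.
    + intros [h|[m [h1 h2]]]; auto. destruct (Nat.eq_dec m K); [subst; auto|]. left; right; exists m; split; auto; lia.
Qed.
End P.

Fixpoint code (n : nat) (k idx : nat -> nat) : nat :=
  match n with O => O | S n' => (code n' k idx + (idx n - 1) * prodN n' k)%nat end.

Lemma code_bound n k idx : valid_index n k idx -> (code n k idx < prodN n k)%nat.
Proof. induction n; simpl; intros H; [lia|].
  assert (H1 : valid_index n k idx) by (intros s hs; apply H; lia).
  specialize (IHn H1). specialize (H (S n) ltac:(lia)). nia. Qed.

Lemma code_inj n k idx idx' : valid_index n k idx -> valid_index n k idx' ->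
  code n k idx = code n k idx' -> forall s, (1 <= s <= n)%nat -> idx s = idx' s.
Proof. induction n; simpl; intros H H' E s hs; [lia|].
  assert (H1 : valid_index n k idx) by (intros t ht; apply H; lia).
  assert (H1' : valid_index n k idx') by (intros t ht; apply H'; lia).
  pose proof (code_bound _ _ _ H1). pose proof (code_bound _ _ _ H1').
  pose proof (H (S n) ltac:(lia)). pose proof (H' (S n) ltac:(lia)).
  assert (Eq : (idx (S n) - 1 = idx' (S n) - 1)%nat).
  { set (q := (idx (S n) - 1)%nat) in *. set (q' := (idx' (S n) - 1)%nat) in *.
    set (P := prodN n k) in *. set (c1 := code n k idx) in *. set (c2 := code n k idx') in *.
    destruct (Nat.lt_trichotomy q q') as [h|[h|h]]; auto.
    - assert (q * P + P <= q' * P)%nat by nia. lia.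
    - assert (q' * P + P <= q * P)%nat by nia. lia. }
  destruct (Nat.eq_dec s (S n)). subst; lia.
  apply IHn; auto. rewrite Eq in E. lia. lia. Qed.

Lemma code_real n k idx : valid_index n k idx ->
  sumR n (fun s => INR (prodN (s-1) k) * INR (idx s)) = INR (code n k idx) + sumR n (fun s => INR (prodN (s-1) k)).
Proof. induction n; simpl; intros H; [ring|].
  rewrite IHn by (intros t ht; apply H; lia).
  pose proof (H (S n) ltac:(lia)). rewrite Nat.sub_0_r, plus_INR, mult_INR, minus_INR by lia. simpl (INR 1). ring. Qed.

Lemma b_mono (b : nat -> R) m : (forall l, (1 <= l <= m)%nat -> b l < b (S l)) ->
  forall l l', (1 <= l)%nat -> (l <= l')%nat -> (l' <= S m)%nat -> b l <= b l'.
Proof. intros H l l' h1 h2 h3. induction l'.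
  - lia.
  - destruct (Nat.eq_dec l (S l')). subst; lra.
    eapply Rle_trans. apply IHl'; lia. left; apply H; lia. Qed.

Lemma cell_ext d n X a b delta idx idx' x : (forall s, (1 <= s <= n)%nat -> idx s = idx' s) ->
  cell d n X a b delta idx x -> cell d n X a b delta idx' x.
Proof. intros E [h1 h2]; split; auto. intros s hs. rewrite <- E by auto. auto. Qed.

Lemma dot_scal d lam (a x : nat -> R) : dot d (fun i => lam * a i) x = lam * dot d a x.
Proof. unfold dot. rewrite <- sumR_scal. apply sumR_ext; intros; ring. Qed.

Lemma first_layer d n k X a b delta idx x lam s :
  0 < delta -> 0 < lam ->
  (forall s l, (1 <= s <= n)%nat -> (1 <= l <= k s)%nat -> b s l < b s (S l)) ->
  valid_index n k idx -> cell d n X a b delta idx x -> (1 <= s <= n)%nat ->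
  Rabs (net_p d k (fun s i => lam * a s i) (fun s l => lam * b s l) (fun _ _ => 1) s x - INR (idx s))
   <= INR (k s) * exp (- (lam * delta)).
Proof.
  intros Hd Hl Hb Hv [_ Hc] Hs. unfold net_p.
  pose proof (Hv s Hs) as Hi. specialize (Hc s Hs).
  rewrite <- (Nat.min_r (k s) (idx s)) by lia. rewrite <- sum_ind.
  eapply Rle_trans. apply sumR_err with (e := fun _ => exp (- (lam * delta))).
  2:{ rewrite <- sumR_const. apply sumR_le; intros. rewrite Rabs_R1; lra. }
  intros l hl. rewrite dot_scal. unfold ind.
  destruct (Nat.leb_spec l (idx s)).
  - apply rho_hi. assert (b s l <= b s (idx s)) by (apply (b_mono (b s) (k s)); auto; lia).
    assert (delta <= dot d (a s) x - b s l) by lra. nra.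
  - apply rho_lo. assert (b s (S (idx s)) <= b s l) by (apply (b_mono (b s) (k s)); auto; lia).
    assert (dot d (a s) x - b s l <= - delta) by lra. nra.
Qed.

Lemma abs_le_inv x e : Rabs x <= e -> - e <= x <= e.
Proof. unfold Rabs; destruct (Rcase_abs x); lra. Qed.

Lemma analytic d n k X a b delta idx x lam mu (F : nat -> nat -> R) j :
  0 < delta -> 0 < lam -> 0 < mu ->
  (forall s l, (1 <= s <= n)%nat -> (1 <= l <= k s)%nat -> b s l < b s (S l)) ->
  valid_index n k idx -> cell d n X a b delta idx x ->
  sumR n (fun s => INR (prodN (s-1) k) * INR (k s)) * exp (- (lam * delta)) <= 1/4 ->
  (forall i, (1 <= i)%nat -> Rabs (F i j - F (i-1)%nat j) <= 1) ->
  INR (prodN n k) * exp (- (mu / 4)) < 1/4 ->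
  Rabs (net_g d n (prodN n k) k (fun s i => lam * a s i) (fun s l => lam * b s l) (fun _ _ => 1)
          (fun s => mu * INR (prodN (s-1) k))
          (fun i => mu * (sumR n (fun s => INR (prodN (s-1) k)) + INR i - 3/2))
          (fun i j => F i j - F (i-1)%nat j) j x - (F (S (code n k idx)) j - F O j)) < 1/4.
Proof.
  intros Hd Hl Hm Hb Hv Hc HE HF HK.
  set (C0 := sumR n (fun s => INR (prodN (s-1) k))).
  set (p := fun s => net_p d k (fun s i => lam * a s i) (fun s l => lam * b s l) (fun _ _ => 1) s x).
  set (t := sumR n (fun s => INR (prodN (s-1) k) * p s)).
  assert (Ht : Rabs (t - (INR (code n k idx) + C0)) <= 1/4).
  { unfold C0. rewrite <- code_real by auto. unfold t.
    eapply Rle_trans. apply sumR_err with (e := fun s => INR (k s) * exp (- (lam * delta))).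
    intros s hs. apply (first_layer d n k X a b delta idx x lam s); auto.
    eapply Rle_trans; [|apply HE]. rewrite (Rmult_comm (sumR _ _)), <- sumR_scal. apply Req_le, sumR_ext; intros.
    rewrite Rabs_right by (apply Rle_ge, pos_INR). ring. }
  assert (Harg : sumR n (fun s => mu * INR (prodN (s-1) k) * p s) = mu * t).
  { unfold t. rewrite <- sumR_scal. apply sumR_ext; intros; ring. }
  pose proof (code_bound _ _ _ Hv) as Hcb.
  set (cd := code n k idx) in *.
  unfold p in Harg; cbv beta in Harg. unfold net_g. cbv beta. rewrite Harg.
  replace (F (S cd) j - F O j) with (sumR (prodN n k) (fun i => (F i j - F (i-1)%nat j) * ind (S cd) i)) by (rewrite sum_tele, Nat.min_r by lia; auto).
  eapply Rle_lt_trans. apply sumR_err with (e := fun _ => exp (- (mu / 4))).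
  - intros i hi. unfold ind. destruct (Nat.leb_spec i (S cd)).
    + apply rho_hi. assert (INR i <= INR cd + 1) by (rewrite <- S_INR; apply le_INR; auto).
      apply abs_le_inv in Ht. nra.
    + apply rho_lo. assert (INR cd + 2 <= INR i) by (replace 2 with (INR 2) by (simpl; ring); rewrite <- plus_INR; apply le_INR; lia).
      apply abs_le_inv in Ht. nra.
  - eapply Rle_lt_trans; [|apply HK]. rewrite <- sumR_const. apply sumR_le; intros i hi.
    pose proof (HF i ltac:(lia)). pose proof (exp_pos (- (mu/4))). nra.
Qed.

Theorem corollary2 (d c n : nat) (X : (nat -> R) -> Prop) (D : ProbSpace sample)
  (k : nat -> nat) (delta : R) :
  (1 <= c)%nat ->
  (forall s, (1 <= s <= n)%nat -> (1 <= k s)%nat) ->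
  almost_surely D (fun z => X (fst z) /\ (1 <= snd z <= c)%nat) ->
  separable d c n X D k delta ->
  exists (us : nat -> nat -> R) (beta v : nat -> nat -> R) (u gamma : nat -> R)
         (W : nat -> nat -> R),
    almost_surely D (fun z =>
      (1 <= snd z <= c)%nat /\
      forall j, (1 <= j <= c)%nat -> j <> snd z ->
        net_g d n (prodN n k) k us beta v u gamma W j (fst z)
        < net_g d n (prodN n k) k us beta v u gamma W (snd z) (fst z)).
Proof.
  intros Hc Hk Hdom [Hdel [a [b [Ha [Hb [Hlab Hcov]]]]]].
  destruct Hdom as [Nd [Nd1 [Nd2 Nd3]]].
  destruct Hcov as [Nc [Nc1 [Nc2 Nc3]]].
  set (Y := fun idx => epsilon (inhabits 0%nat) (fun yi => (1 <= yi <= c)%nat /\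
          almost_surely D (fun z => cell d n X a b delta idx (fst z) -> snd z = yi))).
  set (Sel := fun m => epsilon (inhabits (fun _ : nat => 1%nat))
          (fun idx => valid_index n k idx /\ code n k idx = m)).
  set (NS := fun m => epsilon (inhabits Nd) (fun N => measurable D N /\ prob D N = 0 /\
          (valid_index n k (Sel m) -> forall z, ~ (cell d n X a b delta (Sel m) (fst z) -> snd z = Y (Sel m)) -> N z))).
  assert (HNS : forall m, measurable D (NS m) /\ prob D (NS m) = 0 /\
          (valid_index n k (Sel m) -> forall z, ~ (cell d n X a b delta (Sel m) (fst z) -> snd z = Y (Sel m)) -> NS m z)).
  { intros m. unfold NS. apply epsilon_spec.
    destruct (classic (valid_index n k (Sel m))) as [hv|hv].
    - assert (hy := @epsilon_spec _ (inhabits 0%nat) (fun yi => (1 <= yi <= c)%nat /\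
          almost_surely D (fun z => cell d n X a b delta (Sel m) (fst z) -> snd z = yi)) (Hlab _ hv)).
      destruct hy as [_ [N [h1 [h2 h3]]]]. exists N; auto.
    - exists Nd; split; [auto| split; [auto| intros; contradiction]]. }
  set (L := fun i => match i with O => O | S i' => Y (Sel i') end).
  set (F := fun i j => if Nat.eqb (L i) j then 1 else 0).
  set (E := sumR n (fun s => INR (prodN (s-1) k) * INR (k s))).
  assert (HE0 : 0 <= E).
  { unfold E. replace 0 with (sumR n (fun _ => 0)) by (rewrite sumR_const; ring). apply sumR_le; intros.
    apply Rmult_le_pos; apply pos_INR. }
  set (K := prodN n k).
  set (eta1 := / (4 * (E + 1))). set (eta2 := / (4 * (INR K + 1))).
  assert (He1 : 0 < eta1 < 1) by (unfold eta1; split; [apply Rinv_0_lt_compat; lra| rewrite <- Rinv_1; apply Rinv_lt_contravar; lra]).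
  pose proof (pos_INR K) as HK0.
  assert (He2 : 0 < eta2 < 1) by (unfold eta2; split; [apply Rinv_0_lt_compat; lra| rewrite <- Rinv_1; apply Rinv_lt_contravar; lra]).
  set (lam := - ln eta1 / delta). set (mu := -4 * ln eta2).
  assert (Hl1 : ln eta1 < 0) by (rewrite <- ln_1; apply ln_increasing; lra).
  assert (Hl2 : ln eta2 < 0) by (rewrite <- ln_1; apply ln_increasing; lra).
  assert (Hlam : 0 < lam) by (unfold lam; apply Rdiv_lt_0_compat; lra).
  assert (Hmu : 0 < mu) by (unfold mu; lra).
  assert (Hx1 : exp (- (lam * delta)) = eta1).
  { replace (- (lam * delta)) with (ln eta1) by (unfold lam; field; lra). apply exp_ln; lra. }
  assert (Hx2 : exp (- (mu / 4)) = eta2).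
  { replace (- (mu / 4)) with (ln eta2) by (unfold mu; field). apply exp_ln; lra. }
  exists (fun s i => lam * a s i), (fun s l => lam * b s l), (fun _ _ => 1),
    (fun s => mu * INR (prodN (s-1) k)),
    (fun i => mu * (sumR n (fun s => INR (prodN (s-1) k)) + INR i - 3/2)),
    (fun i j => F i j - F (i-1)%nat j).
  assert (Hnull : null D (fun z => (Nd z \/ Nc z) \/ exists m, (m < K)%nat /\ NS m z)).
  { apply null_bigunion. apply null_union; split; auto. intros m; split; apply HNS. }
  exists (fun z => (Nd z \/ Nc z) \/ exists m, (m < K)%nat /\ NS m z).
  split; [apply Hnull|]. split; [apply Hnull|].
  intros z HP. destruct (classic ((Nd z \/ Nc z) \/ exists m, (m < K)%nat /\ NS m z)) as [h|h]; auto.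
  exfalso; apply HP; clear HP.
  assert (Hd : X (fst z) /\ (1 <= snd z <= c)%nat) by (apply NNPP; intro h'; apply h; left; left; auto).
  assert (Hcv : exists idx, valid_index n k idx /\ cell d n X a b delta idx (fst z))
    by (apply NNPP; intro h'; apply h; left; right; auto).
  destruct Hcv as [idx [Hv Hcell]].
  set (m := code n k idx).
  assert (Hm : (m < K)%nat) by (apply code_bound; auto).
  assert (HS := @epsilon_spec _ (inhabits (fun _ : nat => 1%nat))
          (fun idx => valid_index n k idx /\ code n k idx = m) (ex_intro _ idx (conj Hv eq_refl))).
  fold (Sel m) in HS. destruct HS as [HSv HSc].
  assert (Hcell' : cell d n X a b delta (Sel m) (fst z)).
  { apply (cell_ext d n X a b delta idx); auto. intros s hs. apply (code_inj n k); auto. }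
  assert (Hy : snd z = Y (Sel m)).
  { apply NNPP; intro hn. apply h. right. exists m; split; auto. apply (proj2 (proj2 (HNS m))); auto. }
  assert (HL : L (S m) = snd z) by (simpl; auto).
  assert (HF : forall j, forall i, (1 <= i)%nat -> Rabs (F i j - F (i-1)%nat j) <= 1).
  { intros j i _. unfold F. destruct (Nat.eqb (L i) j), (Nat.eqb (L (i-1)%nat) j);
    rewrite ?Rminus_0_r, ?Rminus_diag, ?Rabs_R0, ?Rabs_R1; try lra.
    rewrite Rabs_left; lra. }
  assert (HEb : E * exp (- (lam * delta)) <= 1/4).
  { rewrite Hx1. unfold eta1. apply (Rmult_le_reg_r (4 * (E+1))); [lra|].
    rewrite Rmult_assoc, Rinv_l by lra. lra. }
  assert (HKb : INR K * exp (- (mu / 4)) < 1/4).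
  { rewrite Hx2. unfold eta2. apply (Rmult_lt_reg_r (4 * (INR K+1))); [lra|].
    rewrite Rmult_assoc, Rinv_l by lra. lra. }
  split; [apply Hd|].
  intros j hj hne.
  pose proof (analytic d n k X a b delta idx (fst z) lam mu F j Hdel Hlam Hmu Hb Hv Hcell HEb (HF j) HKb) as A1.
  pose proof (analytic d n k X a b delta idx (fst z) lam mu F (snd z) Hdel Hlam Hmu Hb Hv Hcell HEb (HF (snd z)) HKb) as A2.
  fold m in A1, A2. fold K in A1, A2.
  assert (F (S m) (snd z) = 1) by (unfold F; rewrite HL, Nat.eqb_refl; auto).
  assert (F (S m) j = 0) by (unfold F; rewrite HL; destruct (Nat.eqb_spec (snd z) j); auto; congruence).
  assert (F O j = 0) by (unfold F; change (L O) with O; destruct (Nat.eqb_spec O j); [lia|auto]).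
  assert (F O (snd z) = 0) by (unfold F; change (L O) with O; destruct (Nat.eqb_spec O (snd z)); [lia|auto]).
  apply Rlt_le, abs_le_inv in A1. apply Rlt_le, abs_le_inv in A2.
  rewrite H, H0, H1, H2 in *. unfold K in *. lra.
Qed.
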